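(* Let $E_1,E_2,E_3,H_1,H_2,H_3$ be logically independent events with $H_i\ne\emptyset$, let $(x_1,x_2,x_3)\in[0,1]^3$, and let $$\mathcal M=(x_1,x_2,x_3,T_L(x_1,x_2),T_L(x_1,x_3),T_L(x_2,x_3),T_L(x_1,x_2,x_3))$$ be a prevision assessment on $\mathcal F=\{\mathscr C_1,\mathscr C_2,\mathscr C_3,\mathscr C_{12},\mathscr C_{13},\mathscr C_{23},\mathscr C_{123}\}$, where $T_L(x_i,x_j)=\max\{x_i+x_j-1,0\}$ and $T_L(x_1,x_2,x_3)=\max\{x_1+x_2+x_3-2,0\}$. (i) If $x_1+x_2+x_3-2\ge0$, then $\mathcal M$ is coherent. (ii) If $x_1+x_2-1>0$, $x_1+x_3-1>0$, $x_2+x_3-1>0$ and $x_1+x_2+x_3-2<0$, then $\mathcal M$ is not coherent.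
   Context: Events are identified with their indicators; $\bar E$ is the negation of $E$. For $H\ne\emptyset$ the conditional event $E|H$ is true if $EH$ is true, false if $\bar EH$ is true, void if $\bar H$ is true; with $P(E|H)=x$ it is identified with the random quantity $EH+x\bar H$, and a conditional random quantity $X|H$ with prevision $\mu$ with $XH+\mu\bar H$. Coherence (de Finetti): an assessment $(\mu_1,\dots,\mu_m)$ on $\{X_1|H_1,\dots,X_m|H_m\}$ is coherent iff for all real stakes $s_i$ the gain $G=\sum_is_iH_i(X_i-\mu_i)$, restricted to $H_1\vee\dots\vee H_m$, satisfies $\min G\le0\le\max G$. Logical independence: all conjunctions of the listed events or their negations are nonempty. Notation: $\mathscr C_i=E_i|H_i$, $\mathscr C_{ij}=(E_i|H_i)\wedge(E_j|H_j)$, $\mathscr C_{123}=(E_1|H_1)\wedge(E_2|H_2)\wedge(E_3|H_3)$, with previsions $x_i,x_{ij},x_{123}$ in the order of $\mathcal F$. Conjunction of two: $\mathscr C_{ij}$ equals $1$ if $E_iH_iE_jH_j$ true, $0$ if $\bar E_iH_i\vee\bar E_jH_j$ true, $x_i$ if $\bar H_iE_jH_j$ true, $x_j$ if $\bar H_jE_iH_i$ true, $x_{ij}$ if $\bar H_i\bar H_j$ true. $\mathscr C_{123}$ equals $1$ if $E_1H_1E_2H_2E_3H_3$ true; $0$ if $\bar E_1H_1\vee\bar E_2H_2\vee\bar E_3H_3$ true; $x_1$, $x_2$, $x_3$ if respectively $\bar H_1E_2H_2E_3H_3$, $\bar H_2E_1H_1E_3H_3$, $\bar H_3E_1H_1E_2H_2$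 true; $x_{12}$, $x_{13}$, $x_{23}$ if respectively $\bar H_1\bar H_2E_3H_3$, $\bar H_1\bar H_3E_2H_2$, $\bar H_2\bar H_3E_1H_1$ true; $x_{123}$ if $\bar H_1\bar H_2\bar H_3$ true. *)

(* Defs.v *)
From Stdlib Require Import Reals Bool.
Open Scope R_scope.

(* Events on a sample space Omega are identified with their indicators,
   represented as boolean predicates Omega -> bool. *)

Definition ind (b : bool) : R := if b then 1 else 0.

(* Conditional event E|H with P(E|H) = x, as the random quantity EH + x (not H). *)
Definition cond_ev {Omega : Type} (E H : Omega -> bool) (x : R) (w : Omega) : R :=
  if H w then ind (E w) else x.

(* Conjunction (E_i|H_i) /\ (E_j|H_j), given previsions x_i, x_j, x_ij. *)
Definition conj2 {Omega : Type} (Ei Hi Ej Hj : Omega -> bool) (xi xj xij : R)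
  (w : Omega) : R :=
  if (Hi w && negb (Ei w)) || (Hj w && negb (Ej w)) then 0
  else if Hi w && Hj w then 1
  else if negb (Hi w) && Hj w then xi
  else if Hi w && negb (Hj w) then xj
  else xij.

Definition conj3 {Omega : Type} (E1 H1 E2 H2 E3 H3 : Omega -> bool)
  (x1 x2 x3 x12 x13 x23 x123 : R) (w : Omega) : R :=
  if (H1 w && negb (E1 w)) || (H2 w && negb (E2 w)) || (H3 w && negb (E3 w)) then 0
  else match H1 w, H2 w, H3 w with
       | true,  true,  true  => 1
       | false, true,  true  => x1
       | true,  false, true  => x2
       | true,  true,  false => x3
       | false, false, true  => x12
       | false, true,  false => x13
       | true,  false, false => x23
       | false, false, false => x123
       end.

Definition logically_independent6 {Omega : Type} (E1 E2 E3 H1 H2 H3 : Omega -> bool) : Prop :=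
  forall b1 b2 b3 c1 c2 c3 : bool, exists w : Omega,
    E1 w = b1 /\ E2 w = b2 /\ E3 w = b3 /\ H1 w = c1 /\ H2 w = c2 /\ H3 w = c3.

(* For each stake vector, the gain G = sum_k s_k (Q_k - mu_k), where Q_k is the
   conditional random quantity (X_k|H_k = X_k H_k + mu_k not H_k, so that
   H_k (X_k - mu_k) = Q_k - mu_k), restricted to H1 \/ H2 \/ H3, must satisfy
   min G <= 0 <= max G.  Since G takes finitely many values (it depends only on
   the truth values of the six events), this is the existence of points of
   H1 \/ H2 \/ H3 where G <= 0 and where G >= 0. *)
Definition gain {Omega : Type} (E1 E2 E3 H1 H2 H3 : Omega -> bool)
  (x1 x2 x3 x12 x13 x23 x123 : R)
  (s1 s2 s3 s12 s13 s23 s123 : R) (w : Omega) : R :=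
    s1 * (cond_ev E1 H1 x1 w - x1)
  + s2 * (cond_ev E2 H2 x2 w - x2)
  + s3 * (cond_ev E3 H3 x3 w - x3)
  + s12 * (conj2 E1 H1 E2 H2 x1 x2 x12 w - x12)
  + s13 * (conj2 E1 H1 E3 H3 x1 x3 x13 w - x13)
  + s23 * (conj2 E2 H2 E3 H3 x2 x3 x23 w - x23)
  + s123 * (conj3 E1 H1 E2 H2 E3 H3 x1 x2 x3 x12 x13 x23 x123 w - x123).

Definition coherent7 {Omega : Type} (E1 E2 E3 H1 H2 H3 : Omega -> bool)
  (x1 x2 x3 x12 x13 x23 x123 : R) : Prop :=
  forall s1 s2 s3 s12 s13 s23 s123 : R,
    let G := gain E1 E2 E3 H1 H2 H3 x1 x2 x3 x12 x13 x23 x123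
                  s1 s2 s3 s12 s13 s23 s123 in
    (exists w, (H1 w || H2 w || H3 w) = true /\ G w <= 0) /\
    (exists w, (H1 w || H2 w || H3 w) = true /\ 0 <= G w).

Definition TL2 (a b : R) : R := Rmax (a + b - 1) 0.
Definition TL3 (a b c : R) : R := Rmax (a + b + c - 2) 0.

(* Main.v *)
Require Import Defs.
From Stdlib Require Import Reals Bool Lra Psatz.
Open Scope R_scope.

Lemma four_pts (p1 p2 p3 p4 G1 G2 G3 G4 : R) :
  0 <= p1 -> 0 <= p2 -> 0 <= p3 -> 0 <= p4 -> p1 + p2 + p3 + p4 = 1 ->
  p1 * G1 + p2 * G2 + p3 * G3 + p4 * G4 = 0 ->
  (G1 <= 0 \/ G2 <= 0 \/ G3 <= 0 \/ G4 <= 0) /\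
  (0 <= G1 \/ 0 <= G2 \/ 0 <= G3 \/ 0 <= G4).
Proof.
  intros.
  split.
  - destruct (Rle_dec G1 0); [auto|]. destruct (Rle_dec G2 0); [auto|].
    destruct (Rle_dec G3 0); [auto|]. destruct (Rle_dec G4 0); [auto|].
    exfalso.
    assert (0 <= p1 * G1) by (apply Rmult_le_pos; lra).
    assert (0 <= p2 * G2) by (apply Rmult_le_pos; lra).
    assert (0 <= p3 * G3) by (apply Rmult_le_pos; lra).
    assert (0 <= p4 * G4) by (apply Rmult_le_pos; lra).
    assert (p1 * G1 + p2 * G2 + p3 * G3 + p4 * G4 > 0); [|lra].
    destruct (Rlt_dec 0 p1). { assert (0 < p1 * G1) by (apply Rmult_lt_0_compat; lra). lra. }
    destruct (Rlt_dec 0 p2). { assert (0 < p2 * G2) by (apply Rmult_lt_0_compat; lra). lra. }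
    destruct (Rlt_dec 0 p3). { assert (0 < p3 * G3) by (apply Rmult_lt_0_compat; lra). lra. }
    assert (0 < p4 * G4) by (apply Rmult_lt_0_compat; lra). lra.
  - destruct (Rle_dec 0 G1); [auto|]. destruct (Rle_dec 0 G2); [auto|].
    destruct (Rle_dec 0 G3); [auto|]. destruct (Rle_dec 0 G4); [auto|].
    exfalso.
    assert (0 <= p1 * (-G1)) by (apply Rmult_le_pos; lra).
    assert (0 <= p2 * (-G2)) by (apply Rmult_le_pos; lra).
    assert (0 <= p3 * (-G3)) by (apply Rmult_le_pos; lra).
    assert (0 <= p4 * (-G4)) by (apply Rmult_le_pos; lra).
    assert (p1 * (-G1) + p2 * (-G2) + p3 * (-G3) + p4 * (-G4) > 0); [|lra].
    destruct (Rlt_dec 0 p1). { assert (0 < p1 * (-G1)) by (apply Rmult_lt_0_compat; lra). lra. }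
    destruct (Rlt_dec 0 p2). { assert (0 < p2 * (-G2)) by (apply Rmult_lt_0_compat; lra). lra. }
    destruct (Rlt_dec 0 p3). { assert (0 < p3 * (-G3)) by (apply Rmult_lt_0_compat; lra). lra. }
    assert (0 < p4 * (-G4)) by (apply Rmult_lt_0_compat; lra). lra.
Qed.

Theorem theorem24 (Omega : Type) (E1 E2 E3 H1 H2 H3 : Omega -> bool)
  (x1 x2 x3 : R) :
  logically_independent6 E1 E2 E3 H1 H2 H3 ->
  (exists w, H1 w = true) -> (exists w, H2 w = true) -> (exists w, H3 w = true) ->
  0 <= x1 <= 1 -> 0 <= x2 <= 1 -> 0 <= x3 <= 1 ->
  (x1 + x2 + x3 - 2 >= 0 ->
     coherent7 E1 E2 E3 H1 H2 H3 x1 x2 x3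
       (TL2 x1 x2) (TL2 x1 x3) (TL2 x2 x3) (TL3 x1 x2 x3)) /\
  (x1 + x2 - 1 > 0 -> x1 + x3 - 1 > 0 -> x2 + x3 - 1 > 0 -> x1 + x2 + x3 - 2 < 0 ->
     ~ coherent7 E1 E2 E3 H1 H2 H3 x1 x2 x3
       (TL2 x1 x2) (TL2 x1 x3) (TL2 x2 x3) (TL3 x1 x2 x3)).
Proof.
  intros LI _ _ _ B1 B2 B3. split.
  - intros Hs.
    assert (T12 : TL2 x1 x2 = x1 + x2 - 1) by (unfold TL2; apply Rmax_left; lra).
    assert (T13 : TL2 x1 x3 = x1 + x3 - 1) by (unfold TL2; apply Rmax_left; lra).
    assert (T23 : TL2 x2 x3 = x2 + x3 - 1) by (unfold TL2; apply Rmax_left; lra).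
    assert (T123 : TL3 x1 x2 x3 = x1 + x2 + x3 - 2) by (unfold TL3; apply Rmax_left; lra).
    rewrite T12, T13, T23, T123.
    intros s1 s2 s3 s12 s13 s23 s123 G.
    destruct (LI true true true true true true) as (wa & a1 & a2 & a3 & a4 & a5 & a6).
    destruct (LI false true true true true true) as (wb & b1 & b2 & b3 & b4 & b5 & b6).
    destruct (LI true false true true true true) as (wc & c1 & c2 & c3 & c4 & c5 & c6).
    destruct (LI true true false true true true) as (wd & d1 & d2 & d3 & d4 & d5 & d6).
    assert (Ga : G wa = s1 * (1 - x1) + s2 * (1 - x2) + s3 * (1 - x3)
       + s12 * (1 - (x1 + x2 - 1)) + s13 * (1 - (x1 + x3 - 1)) + s23 * (1 - (x2 + x3 - 1))
       + s123 * (1 - (x1 + x2 + x3 - 2))).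
    { unfold G, gain, cond_ev, conj2, conj3, ind. rewrite a1, a2, a3, a4, a5, a6. simpl. ring. }
    assert (Gb : G wb = s1 * (0 - x1) + s2 * (1 - x2) + s3 * (1 - x3)
       + s12 * (0 - (x1 + x2 - 1)) + s13 * (0 - (x1 + x3 - 1)) + s23 * (1 - (x2 + x3 - 1))
       + s123 * (0 - (x1 + x2 + x3 - 2))).
    { unfold G, gain, cond_ev, conj2, conj3, ind. rewrite b1, b2, b3, b4, b5, b6. simpl. ring. }
    assert (Gc : G wc = s1 * (1 - x1) + s2 * (0 - x2) + s3 * (1 - x3)
       + s12 * (0 - (x1 + x2 - 1)) + s13 * (1 - (x1 + x3 - 1)) + s23 * (0 - (x2 + x3 - 1))
       + s123 * (0 - (x1 + x2 + x3 - 2))).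
    { unfold G, gain, cond_ev, conj2, conj3, ind. rewrite c1, c2, c3, c4, c5, c6. simpl. ring. }
    assert (Gd : G wd = s1 * (1 - x1) + s2 * (1 - x2) + s3 * (0 - x3)
       + s12 * (1 - (x1 + x2 - 1)) + s13 * (0 - (x1 + x3 - 1)) + s23 * (0 - (x2 + x3 - 1))
       + s123 * (0 - (x1 + x2 + x3 - 2))).
    { unfold G, gain, cond_ev, conj2, conj3, ind. rewrite d1, d2, d3, d4, d5, d6. simpl. ring. }
    assert (K := four_pts (x1 + x2 + x3 - 2) (1 - x1) (1 - x2) (1 - x3)
                   (G wa) (G wb) (G wc) (G wd)).
    destruct K as [K1 K2]; try lra.
    { rewrite Ga, Gb, Gc, Gd. ring. }
    assert (Ha : (H1 wa || H2 wa || H3 wa) = true) by (rewrite a4; reflexivity).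
    assert (Hb : (H1 wb || H2 wb || H3 wb) = true) by (rewrite b4; reflexivity).
    assert (Hc : (H1 wc || H2 wc || H3 wc) = true) by (rewrite c4; reflexivity).
    assert (Hd : (H1 wd || H2 wd || H3 wd) = true) by (rewrite d4; reflexivity).
    split.
    + destruct K1 as [?|[?|[?|?]]]; eauto.
    + destruct K2 as [?|[?|[?|?]]]; eauto.
  - intros P12 P13 P23 Ps.
    assert (T12 : TL2 x1 x2 = x1 + x2 - 1) by (unfold TL2; apply Rmax_left; lra).
    assert (T13 : TL2 x1 x3 = x1 + x3 - 1) by (unfold TL2; apply Rmax_left; lra).
    assert (T23 : TL2 x2 x3 = x2 + x3 - 1) by (unfold TL2; apply Rmax_left; lra).
    assert (T123 : TL3 x1 x2 x3 = 0) by (unfold TL3; apply Rmax_right; lra).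
    rewrite T12, T13, T23, T123.
    intros C. destruct (C (-1) (-1) (-1) 1 1 1 (-1)) as [[w [Hw Gw]] _].
    revert Hw Gw. unfold gain, cond_ev, conj2, conj3, ind.
    destruct (E1 w), (E2 w), (E3 w), (H1 w), (H2 w), (H3 w); simpl; intros; lra.
Qed.
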